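(* Let $n\ge2$ be an integer and $B(0,1)\subseteq\mathbb{R}^n$ the closed unit ball. If $A\subseteq B(0,1)$ is a Lusin set, then for every hyperplane $l$ tangent to $B(0,1)$, with $\pi:\mathbb{R}^n\to l$ the orthogonal projection, $\pi[A]$ is a Lusin set in $\pi[B(0,1)]$. The same holds with ''Lusin set'' replaced by ''Sierpiński set''.
   Context: A Lusin set in a Polish space $Y$ is an uncountable set $S\subseteq Y$ such that $S\cap M$ is countable for every meager $M\subseteq Y$. A Sierpiński set is an uncountable set $S$ such that $S\cap N$ is countable for every Lebesgue null set $N$. *)

(* Defs.v *)
(* R : realType, R^k is represented by 'rV[R]_k
   (its canonical topology is the product topology = Euclidean topology). *)
From HB Require Import structures.
From mathcomp Require Import all_boot all_order all_algebra.
From mathcomp Require Import all_classical all_reals all_analysis.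
Set Implicit Arguments. Unset Strict Implicit. Unset Printing Implicit Defensive.
Import Order.TTheory GRing.Theory Num.Theory.
Import numFieldNormedType.Exports.
Local Open Scope classical_set_scope.
Local Open Scope ring_scope.

Definition dotv (R : realType) (k : nat) (x y : 'rV[R]_k) : R :=
  \sum_(j < k) x 0 j * y 0 j.

Definition unit_ball (R : realType) (k : nat) : set 'rV[R]_k :=
  [set x | dotv x x <= 1].

Definition rel_closure (T : topologicalType) (Y M : set T) : set T :=
  closure M `&` Y.
Definition rel_interior (T : topologicalType) (Y C : set T) : set T :=
  [set y | Y y /\ exists U : set T, [/\ open U, U y & U `&` Y `<=` C]].
Definition nowhere_dense_in (T : topologicalType) (Y M : set T) : Prop :=
  M `<=` Y /\ rel_interior Y (rel_closure Y M) = set0.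
Definition meager_in (T : topologicalType) (Y M : set T) : Prop :=
  M `<=` Y /\ exists F : nat -> set T,
    (forall i, nowhere_dense_in Y (F i)) /\ M `<=` \bigcup_i F i.

Definition Lusin_in (T : topologicalType) (Y S : set T) : Prop :=
  [/\ S `<=` Y, ~ countable S &
      forall M : set T, meager_in Y M -> countable (S `&` M)].

Definition box (R : realType) (k : nat) (a b : 'rV[R]_k) : set 'rV[R]_k :=
  [set x | forall j, a 0 j <= x 0 j <= b 0 j].
Definition box_vol (R : realType) (k : nat) (a b : 'rV[R]_k) : R :=
  \prod_(j < k) (b 0 j - a 0 j).
Definition lebesgue_null (R : realType) (k : nat) (N : set 'rV[R]_k) : Prop :=
  forall eps : R, 0 < eps ->
    exists a b : nat -> 'rV[R]_k,
      [/\ forall i j, a i 0 j <= b i 0 j,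
          N `<=` \bigcup_i box (a i) (b i) &
          forall m, \sum_(i < m) box_vol (a i) (b i) < eps].

Definition Sierpinski_in (R : realType) (k : nat) (Y S : set 'rV[R]_k) : Prop :=
  [/\ S `<=` Y, ~ countable S &
      forall N : set 'rV[R]_k, lebesgue_null N -> countable (S `&` N)].

(* orthogonal projection of R^k onto the tangent hyperplane
   l_u = {x | <x,u> = 1} of the unit ball at the unit vector u *)
Definition tangent_proj (R : realType) (k : nat) (u : 'rV[R]_k) (x : 'rV[R]_k)
  : 'rV[R]_k := x + (1 - dotv x u) *: u.

(* An isometric parametrization of l_u by R^(k-1):  y |-> u + y Q,
   where the rows of Q are orthonormal and orthogonal to u. *)
Definition hyperplane_chart (R : realType) (k : nat) (u : 'rV[R]_k)
  (Q : 'M[R]_(k.-1, k)) (y : 'rV[R]_(k.-1)) : 'rV[R]_k := u + y *m Q.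

Definition orthonormal_frame (R : realType) (k : nat) (u : 'rV[R]_k)
  (Q : 'M[R]_(k.-1, k)) : Prop :=
  Q *m Q^T = 1%:M /\ Q *m u^T = 0.

(* Main.v *)
Require Import Defs.
From HB Require Import structures.
From mathcomp Require Import all_boot all_order all_algebra.
From mathcomp Require Import all_classical all_reals all_analysis.
From mathcomp Require Import ring lra.
Set Implicit Arguments. Unset Strict Implicit. Unset Printing Implicit Defensive.
Import Order.TTheory GRing.Theory Num.Theory.
Import numFieldNormedType.Exports.
Local Open Scope classical_set_scope.
Local Open Scope ring_scope.

Section Flat.
Variables (R : realType) (k : nat).
Hypothesis hk : (0 < k)%N.

Let cube := ('rV[R]_k * R)%type.
Let d0 : cube := (0, 0).

Definition Sflat (L : nat -> seq cube) m : seq cube :=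
  flatten [seq d0 :: L i | i <- iota 0 m].

Lemma Sflat_cat L m m' : (m <= m')%N -> exists t, Sflat L m' = Sflat L m ++ t.
Proof.
move=> le; exists (flatten [seq d0 :: L i | i <- iota m (m' - m)]).
by rewrite /Sflat -flatten_cat -map_cat -iotaD subnKC.
Qed.

Lemma Sflat_size L m : (m <= size (Sflat L m))%N.
Proof.
elim: m => [|m IH] //.
rewrite /Sflat -addn1 iotaD map_cat flatten_cat size_cat; apply: leq_add IH _.
by rewrite /= size_cat.
Qed.

Definition item L p := nth d0 (Sflat L p.+1) p.

Lemma item_nth L m p : (p < size (Sflat L m))%N -> item L p = nth d0 (Sflat L m) p.
Proof.
move=> hp; rewrite /item.
have [t1 e1] := Sflat_cat L (leq_maxl m p.+1).
have [t2 e2] := Sflat_cat L (leq_maxr m p.+1).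
have hp2 : (p < size (Sflat L p.+1))%N := Sflat_size L p.+1.
have := congr1 (fun s => nth d0 s p) e1; rewrite nth_cat hp => <-.
have := congr1 (fun s => nth d0 s p) e2; rewrite nth_cat hp2 => <-.
by [].
Qed.

Lemma Sflat_pos L m : (forall i p, p \in L i -> 0 <= p.2) ->
  forall q, q \in Sflat L m -> 0 <= q.2.
Proof.
move=> hL q /flattenP [s /mapP [i _ ->]]; rewrite inE => /orP [/eqP -> //|].
exact: hL.
Qed.

Lemma item_pos L p : (forall i p, p \in L i -> 0 <= p.2) -> 0 <= (item L p).2.
Proof.
move=> hL; rewrite /item; case: (ltnP p (size (Sflat L p.+1))) => h.
  by apply: (Sflat_pos hL); apply: mem_nth.
by rewrite nth_default.
Qed.

Lemma sum_prefix (s : seq cube) (f : cube -> R) m : (m <= size s)%N ->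
  (forall q, q \in s -> 0 <= f q) ->
  \sum_(p < m) f (nth d0 s p) <= \sum_(q <- s) f q.
Proof.
move=> ms hf; rewrite (big_nth d0) -(big_mkord xpredT (fun p => f (nth d0 s p))).
rewrite (@big_cat_nat _ _ _ m 0 (size s)) //= lerDl.
rewrite big_nat_cond; apply: sumr_ge0 => i /andP [/andP [_ h] _].
by apply: hf; apply: mem_nth.
Qed.

Lemma cover_null (N : set 'rV[R]_k) :
 (forall eps, 0 < eps -> exists L : nat -> seq cube,
    [/\ (forall i p, p \in L i -> 0 <= p.2),
        (forall x, N x -> exists i, exists2 p, p \in L i & forall j, `|x 0 j - p.1 0 j| <= p.2) &
        (forall m, \sum_(i < m) \sum_(p <- L i) (2 * p.2) ^+ k <= eps)]) ->
 lebesgue_null N.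
Proof.
move=> H eps eps0.
have e20 : 0 < eps / 2 by rewrite divr_gt0.
have [L [hpos hcov hsum]] := H _ e20.
exists (fun p => (item L p).1 - const_mx (item L p).2).
exists (fun p => (item L p).1 + const_mx (item L p).2).
split.
- move=> p j; rewrite !mxE; have := item_pos p hpos; lra.
- move=> x Nx; have [i [q qL hq]] := hcov x Nx.
  have qS : q \in Sflat L i.+1.
    apply/flattenP; exists (d0 :: L i); last by rewrite inE qL orbT.
    by apply/mapP; exists i => //; rewrite mem_iota /= add0n.
  exists (index q (Sflat L i.+1)) => //.
  rewrite (item_nth (m := i.+1)) ?index_mem // nth_index //.
  move=> j; rewrite !mxE; have := hq j; rewrite ler_norml; lra.
- move=> m.
  apply: (@le_lt_trans _ _ (eps / 2)); last by lra.
  apply: le_trans (hsum m).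
  have -> : \sum_(i < m) box_vol ((item L i).1 - const_mx (item L i).2)
        ((item L i).1 + const_mx (item L i).2)
      = \sum_(i < m) (fun q : cube => (2 * q.2) ^+ k) (nth d0 (Sflat L m) i).
    apply: eq_bigr => i _; rewrite /box_vol.
    rewrite -(item_nth (m := m)); last by apply: leq_trans (Sflat_size L m).
    rewrite (eq_bigr (fun _ => 2 * (item L i).2)); last first.
      by move=> j _; rewrite !mxE; ring.
    by rewrite prodr_const card_ord.
  apply: le_trans (@sum_prefix (Sflat L m) (fun q : cube => (2 * q.2) ^+ k) m (Sflat_size L m) _) _.
    move=> q qS; apply: exprn_ge0; have := Sflat_pos hpos qS; lra.
  rewrite /Sflat big_flatten big_map /=.
  have -> : iota 0 m = index_iota 0 m by rewrite /index_iota subn0.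
  rewrite big_mkord; apply: ler_sum => i _.
  by rewrite big_cons /= mulr0 expr0n /= eqn0Ngt hk add0r.
Qed.

End Flat.

Section Sub.
Variable R : realType.

Lemma poly_bound (I : Type) (r : seq I) (f : I -> R) x :
  (forall i, 0 <= f i) -> 0 <= x <= 1 ->
  \prod_(j <- r) (f j + x) <= \prod_(j <- r) f j + x * \prod_(j <- r) (f j + 2).
Proof.
move=> hf /andP [x0 x1]; elim: r => [|a r IH]; first by rewrite !big_nil; lra.
rewrite !big_cons.
set A := \prod_(j <- r) (f j + x) in IH *.
set P := \prod_(j <- r) f j in IH *.
set P2 := \prod_(j <- r) (f j + 2) in IH *.
have hP : 0 <= P by apply: prodr_ge0.
have hA : 0 <= A by apply: prodr_ge0 => i _; have := hf i; lra.
have hPP : P <= P2 by rewrite /P /P2; apply: ler_prod => i _; rewrite hf /= lerDl.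
have fa := hf a.
have : (f a + x) * A <= (f a + x) * (P + x * P2) by apply: ler_wpM2l => //; lra.
have hP2 : 0 <= P2 by lra.
have h1 : x * P <= x * P2 by apply: ler_wpM2l.
have h2 : x * (x * P2) <= x * P2 by rewrite ler_piMl // mulr_ge0.
nra.
Qed.

Lemma geo m : \sum_(i < m) (2 ^+ i.+1 : R)^-1 <= 1.
Proof.
suff : \sum_(i < m) (2 ^+ i.+1 : R)^-1 = 1 - (2 ^+ m)^-1.
  move=> ->; have : 0 <= (2 ^+ m : R)^-1 by rewrite invr_ge0 exprn_ge0.
  lra.
elim: m => [|m IH]; first by rewrite big_ord0 expr0 invr1 subrr.
rewrite big_ord_recr /= IH exprS.
have h : (2 ^+ m : R) != 0 by rewrite expf_neq0 // pnatr_eq0.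
by field.
Qed.

Lemma count_sum (K N : nat) : (N <= K)%N ->
  \sum_(x : 'I_K) ((x < N)%N)%:R = N%:R :> R.
Proof.
move=> NK; rewrite -(big_mkord xpredT (fun x => ((x < N)%N)%:R)).
rewrite (@big_cat_nat _ _ _ N 0 K) //=.
rewrite big_nat_cond (eq_bigr (fun _ => 1)); last first.
  by move=> i /andP [/andP [_ ->] _].
rewrite -big_nat_cond sumr_const_nat subn0.
rewrite big_nat_cond big1 ?addr0 //.
by move=> i /andP [/andP [h _] _]; rewrite ltnNge h.
Qed.

End Sub.

Section ML.
Variables (R : realType) (m n : nat).
Hypothesis hmn : n = m.+1.
Variables (Q : 'M[R]_(m, n)) (u : 'rV[R]_n).
Hypothesis hQ1 : forall i j, `|Q i j| <= 1.
Hypothesis hu1 : forall j, `|u 0 j| <= 1.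

Definition Eset (N : set 'rV[R]_m) : set 'rV[R]_n :=
  [set x | exists w s, [/\ N w, `|s| <= 1 & x = w *m Q + s *: u]].

Lemma entryD k (A B : 'rV[R]_k) j : (A + B) 0 j = A 0 j + B 0 j.
Proof. by rewrite mxE. Qed.
Lemma entryN k (A : 'rV[R]_k) j : (- A) 0 j = - A 0 j.
Proof. by rewrite mxE. Qed.
Lemma entryZ k c (A : 'rV[R]_k) j : (c *: A) 0 j = c * A 0 j.
Proof. by rewrite mxE. Qed.

Lemma lin_boundQ (v : 'rV[R]_m) j : `|(v *m Q) 0 j| <= \sum_i `|v 0 i|.
Proof.
rewrite mxE; apply: le_trans (ler_norm_sum _ _ _) _.
apply: ler_sum => i _; rewrite normrM.
have h1 := hQ1 i j; have h2 := normr_ge0 (v 0 i); have h3 := normr_ge0 (Q i j); nra.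
Qed.

Lemma grid_bound (x a h : R) : 0 < h -> a <= x ->
  `|x - (a + (2 * (Num.truncn ((x - a) / (2 * h)))%:R + 1) * h)| <= h.
Proof.
move=> h0 ax.
set y := (x - a) / (2 * h).
have y0 : 0 <= y by rewrite /y divr_ge0 //; lra.
have ey : x - a = y * (2 * h) by rewrite /y divfK //; apply/eqP; lra.
have := truncn_itv y0; rewrite -/(Num.truncn y) => /andP [l1 l2].
move: l2; rewrite -addn1 natrD => l2.
set t := (Num.truncn y)%:R in l1 l2 *.
rewrite ler_norml; apply/andP; split; nra.
Qed.

Lemma ML N : lebesgue_null N -> lebesgue_null (Eset N).
Proof.
move=> Nn.
have n0 : (0 < n)%N by rewrite hmn.
apply: (cover_null n0) => eps eps0.
have nR : 1 <= n%:R :> R by rewrite ler1n.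
pose C : R := 3 * n%:R ^+ n.
have C0 : 0 < C by apply: mulr_gt0; [lra | apply: exprn_gt0; lra].
pose e' := eps / (2 * C).
have e'0 : 0 < e' by apply: divr_gt0 => //; apply: mulr_gt0 => //; lra.
have e'E : e' * (2 * C) = eps.
  rewrite /e' divfK //; apply/eqP => h2C.
  have : 0 < 2 * C by apply: mulr_gt0 => //; lra.
  by rewrite h2C ltxx.
  
clearbody e'.
have [a [b [hab hcov hsum]]] := Nn e' e'0.
pose Lv i j := b i 0 j - a i 0 j.
have Lv0 : forall i j, 0 <= Lv i j by move=> i j; rewrite subr_ge0.
pose P2 i := \prod_(j < m) (Lv i j + 2).
have P20 : forall i, 0 < P2 i.
  by move=> i; apply: prodr_gt0 => j _; have := Lv0 i j; lra.
pose h i := Num.min (2^-1) (e' / (2 ^+ i.+1 * (2 * P2 i))).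
have h0 : forall i, 0 < h i.
  move=> i; rewrite lt_min invr_gt0 ltr0n /= divr_gt0 //.
  by apply: mulr_gt0; [apply: exprn_gt0 | apply: mulr_gt0].
have h12 : forall i, h i <= 2^-1 by move=> i; rewrite ge_min lexx.
have hP : forall i, 2 * h i * P2 i <= e' / 2 ^+ i.+1.
  move=> i; have : h i <= e' / (2 ^+ i.+1 * (2 * P2 i)) by rewrite ge_min lexx orbT.
  rewrite ler_pdivlMr; last by apply: mulr_gt0; [apply: exprn_gt0 | apply: mulr_gt0].
  rewrite ler_pdivlMr ?exprn_gt0 // => H; apply: le_trans H; rewrite le_eqVlt; apply/orP; left.
  by apply/eqP; ring.
pose Nj i j := (Num.truncn (Lv i j / (2 * h i))).+1.
pose K i := \big[maxn/0%N]_(j < m) Nj i j.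
have NK : forall i j, (Nj i j <= K i)%N by move=> i j; exact: (@leq_bigmax _ (fun j => Nj i j) j).
pose T i := (Num.truncn (h i)^-1).+1.
pose ind i (f : {ffun 'I_m -> 'I_(K i)}) : R := \prod_j ((f j < Nj i j)%N)%:R.
pose cen i (f : {ffun 'I_m -> 'I_(K i)}) (t : 'I_(T i)) : 'rV[R]_n :=
   (\row_j (a i 0 j + (2 * (f j)%:R + 1) * h i)) *m Q + (-1 + (2 * t%:R + 1) * h i) *: u.
pose L i := [seq (cen i ft.1 ft.2, n%:R * h i * ind i ft.1) |
   ft <- index_enum ({ffun 'I_m -> 'I_(K i)} * 'I_(T i))%type].
exists L; split.
- move=> i p /mapP [ft _ ->] /=; apply: mulr_ge0.
    by apply: mulr_ge0; [lra | exact: ltW].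
  by apply: prodr_ge0 => j _; apply: ler0n.
- move=> x [w [s [Nw hs ->]]].
  have [i _ hbox] := hcov w Nw.
  have hidx' : forall j : 'I_m, (Num.truncn ((w 0%R j - a i 0%R j) / (2 * h i)) < Nj i j)%N.
    move=> j; rewrite ltnS; apply: le_truncn.
    rewrite ler_wpM2r //; first by rewrite invr_ge0; have := h0 i; lra.
    by have := hbox j; rewrite /Lv; lra.
  have hidx : forall j : 'I_m, (Num.truncn ((w 0%R j - a i 0%R j) / (2 * h i)) < K i)%N.
    by move=> j; apply: leq_trans (NK i j).
  pose f : {ffun 'I_m -> 'I_(K i)} := [ffun j => Ordinal (hidx j)].
  have htt : (Num.truncn ((s + 1) / (2 * h i)) < T i)%N.
    rewrite ltnS; apply: le_truncn.
    have hi := h0 i.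
    rewrite ler_pdivrMr; last by lra.
    rewrite mulrCA mulVf ?mulr1; last by apply/eqP; lra.
    by move: hs; rewrite ler_norml; lra.
  pose t : 'I_(T i) := Ordinal htt.
  exists i; exists (cen i f t, n%:R * h i * ind i f).
    apply/mapP; exists (f, t); [exact: mem_index_enum | by []].
  have ind1 : ind i f = 1.
    by rewrite /ind big1 // => j _; rewrite ffunE /= hidx'.
  rewrite ind1 mulr1 => j /=.
  have em : w *m Q + s *: u - cen i f t =
      (w - \row_j (a i 0 j + (2 * (f j)%:R + 1) * h i)) *m Q +
      (s - (-1 + (2 * t%:R + 1) * h i)) *: u.
    by rewrite /cen opprD addrACA -mulmxBl -scalerBl.
  have -> : (w *m Q + s *: u) 0 j - cen i f t 0 j = (w *m Q + s *: u - cen i f t) 0 j.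
    by rewrite [in RHS]entryD [in RHS]entryN.
  rewrite em entryD entryZ.
  apply: le_trans (ler_normD _ _) _.
  have hi := h0 i.
  have b1 : `|((w - \row_j (a i 0 j + (2 * (f j)%:R + 1) * h i)) *m Q) 0 j| <= m%:R * h i.
    apply: le_trans (lin_boundQ _ _) _.
    have hk : forall k, `|(w - \row_j (a i 0 j + (2 * (f j)%:R + 1) * h i)) 0 k| <= h i.
      move=> k; rewrite !mxE ffunE /=.
      by apply: grid_bound => //; have := hbox k; lra.
    apply: le_trans (ler_sum _ (fun k _ => hk k)) _.
    by rewrite sumr_const card_ord mulr_natl.
  have b2 : `|(s - (-1 + (2 * t%:R + 1) * h i)) * u 0 j| <= h i.
    rewrite normrM; have hu := hu1 j; have hn0 := normr_ge0 (u 0 j).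
    have : `|s - (-1 + (2 * t%:R + 1) * h i)| <= h i.
      have -> : s = (s + 1) + -1 by ring.
      have := @grid_bound (s + 1) 0 (h i) hi; rewrite subr0.
      have -> : (s + 1) - (0 + (2 * (Num.truncn ((s + 1) / (2 * h i)))%:R + 1) * h i) =
        (s + 1 + -1) - (-1 + (2 * t%:R + 1) * h i) by rewrite /=; ring.
      by move=> H; apply: H; move: hs; rewrite ler_norml; lra.
    have := normr_ge0 (s - (-1 + (2 * t%:R + 1) * h i)); nra.
  have -> : n%:R = m%:R + 1 :> R by rewrite hmn -addn1 natrD.
  lra.
- move=> M.
  have tot : forall i, \sum_(p <- L i) (2 * p.2) ^+ n <= C * (box_vol (a i) (b i) + e' / 2 ^+ i.+1).
    move=> i; rewrite big_map.
    have indp : forall f, ind i f ^+ n = ind i f.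
      move=> f; rewrite /ind -prodrXl; apply: eq_bigr => j _.
      by case: (f j < Nj i j)%N; rewrite ?expr1n // expr0n /= eqn0Ngt n0.
    have e1 : \sum_(ft <- index_enum ({ffun 'I_m -> 'I_(K i)} * 'I_(T i))%type)
        (2 * (n%:R * h i * ind i ft.1)) ^+ n
        = (2 * n%:R * h i) ^+ n * (T i)%:R * \sum_f ind i f.
      rewrite -(pair_bigA _ (fun f (t : 'I_(T i)) => (2 * (n%:R * h i * ind i f)) ^+ n)) /= mulr_sumr.
      apply: eq_bigr => f _.
      rewrite (eq_bigr (fun _ => (2 * n%:R * h i) ^+ n * ind i f)); last first.
        by move=> t _; rewrite !mulrA exprMn indp.
      by rewrite sumr_const card_ord -mulr_natr; ring.
    have e2 : \sum_f ind i f = \prod_j (Nj i j)%:R.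
      rewrite /ind -(bigA_distr_bigA (fun j (x : 'I_(K i)) => ((x < Nj i j)%N)%:R : R)) /=.
      by apply: eq_bigr => j _; apply: count_sum; exact: NK.
    rewrite e1 e2.
    have hi := h0 i; have hi2 := h12 i.
    have eN1 : (2 * n%:R * h i) ^+ n = n%:R ^+ n * (2 * h i) ^+ n.
      by rewrite -exprMn; congr (_ ^+ _); ring.
    have eN2 : (2 * h i) ^+ n = (2 * h i) * (2 * h i) ^+ m by rewrite hmn exprS.
    have eP : (2 * h i) ^+ m * \prod_j (Nj i j)%:R = \prod_j (2 * h i * (Nj i j)%:R).
      by rewrite prodrMl card_ord.
    have -> : (2 * n%:R * h i) ^+ n * (T i)%:R * \prod_j (Nj i j)%:R =
        n%:R ^+ n * ((2 * h i) * (T i)%:R) * \prod_j (2 * h i * (Nj i j)%:R).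
      by rewrite -eP eN1 eN2; ring.
    have hT : 2 * h i * (T i)%:R <= 3.
      rewrite /T -addn1 natrD.
      have : (Num.truncn (h i)^-1)%:R <= (h i)^-1 by rewrite truncn_le invr_ge0; lra.
      have hh : h i * (h i)^-1 = 1 by rewrite mulfV //; apply/eqP; lra.
      move=> H; nra.
    have hT0 : 0 <= 2 * h i * (T i)%:R by apply: mulr_ge0; [lra | apply: ler0n].
    have hX0 : 0 <= \prod_j (2 * h i * (Nj i j)%:R).
      by apply: prodr_ge0 => j _; apply: mulr_ge0; [lra | apply: ler0n].
    have hN : \prod_j (2 * h i * (Nj i j)%:R) <= \prod_(j < m) (Lv i j + 2 * h i).
      apply: ler_prod => j _; apply/andP; split; first by apply: mulr_ge0; [lra | apply: ler0n].
      rewrite /Nj -addn1 natrD.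
      have : (Num.truncn (Lv i j / (2 * h i)))%:R <= Lv i j / (2 * h i).
        by rewrite truncn_le divr_ge0 //; lra.
      have hh : Lv i j / (2 * h i) * (2 * h i) = Lv i j by rewrite divfK //; apply/eqP; lra.
      move=> H; nra.
    have hpoly := @poly_bound _ _ (index_enum 'I_m) (Lv i) (2 * h i) (Lv0 i).
    have hpoly' : \prod_(j < m) (Lv i j + 2 * h i) <= box_vol (a i) (b i) + 2 * h i * P2 i.
      rewrite /box_vol /P2; apply: hpoly; apply/andP; split; lra.
    have hY : \prod_j (2 * h i * (Nj i j)%:R) <= box_vol (a i) (b i) + e' / 2 ^+ i.+1.
      by have := hP i; lra.
    have hBX : 2 * h i * (T i)%:R * \prod_j (2 * h i * (Nj i j)%:R) <=
        3 * (box_vol (a i) (b i) + e' / 2 ^+ i.+1) by apply: ler_pM.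
    have hA : 0 <= n%:R ^+ n :> R by apply: exprn_ge0; lra.
    rewrite -mulrA; apply: le_trans (ler_wpM2l hA hBX) _.
    by rewrite /C le_eqVlt; apply/orP; left; apply/eqP; ring.
  apply: le_trans (ler_sum _ (fun (i : 'I_M) _ => tot i)) _.
  rewrite -mulr_sumr big_split /=.
  rewrite -mulr_sumr.
  have hV := hsum M; have hg := geo R M.
  have : e' * \sum_(i < M) (2 ^+ i.+1)^-1 <= e' by rewrite ler_piMr //; lra.
  move=> H; rewrite -e'E.
  have : \sum_(i < M) box_vol (a i) (b i) + e' * \sum_(i < M) (2 ^+ i.+1)^-1 <= e' * 2 by lra.
  move=> H2; apply: le_trans (ler_wpM2l (ltW C0) H2) _.
  rewrite le_eqVlt; apply/orP; left; apply/eqP; ring.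
Qed.

End ML.

Section Alg.
Variables (R : realType) (n : nat).
Hypothesis hn : (2 <= n)%N.
Variables (u : 'rV[R]_n) (Q : 'M[R]_(n.-1, n)).
Hypothesis hu : dotv u u = 1.
Hypothesis hQ : Q *m Q^T = 1%:M.
Hypothesis hQu : Q *m u^T = 0.

Lemma dotvE k (x y : 'rV[R]_k) : dotv x y = (x *m y^T) 0 0.
Proof. by rewrite /dotv mxE; apply: eq_bigr => j _; rewrite mxE. Qed.

Lemma mx11_mul k (a : 'M[R]_1) (v : 'M[R]_(1,k)) : a *m v = a 0 0 *: v.
Proof.
apply/matrixP => i j; rewrite !mxE big_ord1.
by rewrite !(ord1 i).
Qed.

Lemma uQ : u *m Q^T = 0.
Proof. by rewrite -(trmxK (u *m Q^T)) trmx_mul trmxK hQu trmx0. Qed.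

Lemma uu : u *m u^T = 1%:M.
Proof.
apply/matrixP => i j; rewrite !(ord1 i) !(ord1 j) -dotvE hu mxE /=.
by [].
Qed.

Lemma complete : Q^T *m Q + u^T *m u = 1%:M.
Proof.
pose M := col_mx Q u.
have MM : M *m M^T = 1%:M.
  rewrite /M tr_col_mx mul_col_row hQ hQu uQ uu.
  by rewrite -scalar_mx_block.
have rk : \rank M = n.
  apply/eqP; rewrite eqn_leq rank_leq_col /=.
  have := mxrankM_maxl M M^T; rewrite MM mxrank1 => H; apply: leq_trans H.
  by rewrite addn1 prednK // (leq_trans _ hn).
have : row_full M by rewrite /row_full rk.
move/row_fullP => [B BM].
have P : M *m (M^T *m M) = M by rewrite mulmxA MM mul1mx.
have : B *m M *m (M^T *m M) = B *m M by rewrite -mulmxA P.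
rewrite BM mul1mx => H.
by rewrite -H /M tr_col_mx mul_row_col.
Qed.

Definition gmap (x : 'rV[R]_n) : 'rV[R]_(n.-1) := x *m Q^T.

Lemma g_lin y z : gmap (y + z *m Q) = gmap y + z.
Proof. by rewrite /gmap mulmxDl -mulmxA hQ mulmx1. Qed.

Lemma g_chart y : gmap (hyperplane_chart u Q y) = y.
Proof. by rewrite /hyperplane_chart g_lin /gmap uQ add0r. Qed.

Lemma dotv_mx11 x : (x *m u^T) *m u = dotv x u *: u.
Proof. by rewrite mx11_mul dotvE. Qed.

Lemma decomp x : x = gmap x *m Q + dotv x u *: u.
Proof.
by rewrite /gmap -dotv_mx11 -!mulmxA -mulmxDr complete mulmx1.
Qed.

Lemma chart_g x : hyperplane_chart u Q (gmap x) = tangent_proj u x.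
Proof.
rewrite /hyperplane_chart /tangent_proj; apply/esym.
rewrite [X in X + _](decomp x) scalerBl scale1r.
by rewrite -addrA (addrC (dotv x u *: u)) subrK addrC.
Qed.

Lemma gproj x : gmap (tangent_proj u x) = gmap x.
Proof. by rewrite /tangent_proj /gmap mulmxDl -scalemxAl uQ scaler0 addr0. Qed.

Lemma mx11_tr (a : 'M[R]_1) : (a *m a^T) 0 0 = a 0 0 ^+ 2.
Proof. by rewrite mxE big_ord1 mxE expr2. Qed.

Lemma dotv_decomp x : dotv x x = dotv (gmap x) (gmap x) + dotv x u ^+ 2.
Proof.
rewrite !dotvE.
have -> : x *m x^T = x *m (Q^T *m Q + u^T *m u) *m x^T by rewrite complete mulmx1.
rewrite mulmxDr mulmxDl mxE; congr (_ + _).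
  by rewrite /gmap trmx_mul trmxK !mulmxA.
by rewrite -mx11_tr trmx_mul trmxK !mulmxA.
Qed.

Lemma dotv_zQ z : dotv (z *m Q) (z *m Q) = dotv z z.
Proof. by rewrite !dotvE trmx_mul mulmxA -(mulmxA z) hQ mulmx1. Qed.

Lemma sq_le_sum k (f : 'I_k -> R) j : f j ^+ 2 <= \sum_i f i ^+ 2.
Proof.
rewrite (bigD1 j) //= lerDl; apply: sumr_ge0 => i _; exact: sqr_ge0.
Qed.

Lemma le1_of_sq (a : R) : a ^+ 2 <= 1 -> `|a| <= 1.
Proof.
move=> h; have h0 := normr_ge0 a; have : `|a| ^+ 2 <= 1 by rewrite real_normK ?num_real.
move=> h2; nra.
Qed.

Lemma coord_le1 k (x : 'rV[R]_k) j : dotv x x <= 1 -> `|x 0 j| <= 1.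
Proof.
move=> h; apply: le1_of_sq; apply: le_trans h.
rewrite /dotv; under eq_bigr do rewrite -expr2; exact: sq_le_sum.
Qed.

Lemma Q_le1 i j : `|Q i j| <= 1.
Proof.
apply: le1_of_sq.
have : (Q *m Q^T) i i = 1 by rewrite hQ mxE eqxx.
rewrite mxE => <-.
under eq_bigr do rewrite mxE -expr2; exact: sq_le_sum.
Qed.

Lemma u_le1 j : `|u 0 j| <= 1.
Proof. by apply: coord_le1; rewrite hu. Qed.

Lemma dotv_convex k (a c : 'rV[R]_k) t : 0 <= t <= 1 ->
  dotv a a <= 1 -> dotv c c <= 1 -> dotv (t *: a + (1 - t) *: c) (t *: a + (1 - t) *: c) <= 1.
Proof.
move=> /andP[t0 t1] ha hc.
apply: (@le_trans _ _ (t * dotv a a + (1 - t) * dotv c c)); last first.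
  have : 0 <= 1 - t by lra.
  move=> h; nra.
rewrite /dotv !mulr_sumr -big_split /=; apply: ler_sum => j _; rewrite !mxE.
have h : 0 <= t * (1 - t) * (a 0 j - c 0 j) ^+ 2.
  by apply: mulr_ge0; [apply: mulr_ge0; lra | exact: sqr_ge0].
nra.
Qed.

Lemma ball_mx k m (x y : 'M[R]_(k,m)) e : 0 < e ->
  ball x e y <-> (forall i j, `|x i j - y i j| < e).
Proof.
move=> e0; rewrite -ball_normE /= /Num.Def.normr /= mx_normrE; split.
  by move/bigmax_ltP => [_ h] i j; have := h (i, j) isT; rewrite !mxE.
by move=> h; apply/bigmax_ltP; split => // -[i j] _; rewrite !mxE; exact: h.
Qed.

Lemma lin_bound k m (M : 'M[R]_(k,m)) (v : 'rV[R]_k) j :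
  (forall i j, `|M i j| <= 1) -> `|(v *m M) 0 j| <= \sum_i `|v 0 i|.
Proof.
move=> hM; rewrite mxE; apply: le_trans (ler_norm_sum _ _ _) _.
apply: ler_sum => i _; rewrite normrM.
have h1 := hM i j; have h2 := normr_ge0 (v 0 i); have h3 := normr_ge0 (M i j); nra.
Qed.

Lemma sum_bound k (f : 'I_k -> R) d : (forall i, f i <= d) -> \sum_i f i <= k%:R * d.
Proof.
move=> h; apply: le_trans (ler_sum _ (fun i _ => h i)) _.
by rewrite sumr_const card_ord mulr_natl.
Qed.

Lemma QT_le1 i j : `|Q^T i j| <= 1.
Proof. by rewrite mxE Q_le1. Qed.

Lemma N_ge2 : 2 <= n%:R :> R.
Proof. by rewrite (ler_nat R 2 n). Qed.

Lemma Nm1 : (n.-1)%:R = n%:R - 1 :> R.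
Proof.
have h : n = (n.-1).+1 by rewrite prednK // (leq_trans _ hn).
by rewrite [in RHS]h -addn1 natrD addrK.
Qed.

Lemma g_closure (S : set 'rV[R]_n) p : closure S p -> closure (gmap @` S) (gmap p).
Proof.
move=> cp B /nbhs_ballP [e /= e0 hB].
have N2 := N_ge2.
pose e' := e / (n%:R + 1).
have e'0 : 0 < e' by rewrite divr_gt0 // ; lra.
have ee : e' * (n%:R + 1) = e by rewrite /e' mulfVK //; apply/eqP => h; lra.
have [x [Sx px]] := cp _ (nbhsx_ballx p e' e'0).
exists (gmap x); split; first by exists x.
apply: hB; apply/(ball_mx _ _ e0) => i j.
have -> : gmap p i j - gmap x i j = ((p - x) *m Q^T) i j by rewrite /gmap mulmxBl !mxE.
rewrite !(ord1 i).
apply: le_lt_trans (lin_bound _ _ QT_le1) _.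
apply: (@le_lt_trans _ _ (n%:R * e')).
  apply: sum_bound => k; rewrite mxE mxE /=.
  by move/(ball_mx _ _ e'0): px => /(_ 0 k) /ltW.
nra.
Qed.

Lemma dotvZ k (c : R) (v : 'rV[R]_k) : dotv (c *: v) (c *: v) = c ^+ 2 * dotv v v.
Proof.
rewrite /dotv mulr_sumr; apply: eq_bigr => j _; rewrite !mxE; ring.
Qed.

Lemma KG y U : dotv y y <= 1 -> open U -> U y ->
  exists y' : 'rV[R]_n, exists d : R, 0 < d /\ forall z : 'rV[R]_(n.-1),
    (forall j, `|z 0 j| < d) ->
    U (y' + z *m Q) /\ dotv (y' + z *m Q) (y' + z *m Q) <= 1.
Proof.
move=> hy oU Uy.
have : nbhs y U by apply: open_nbhs_nbhs; split.
move=> /nbhs_ballP [e /= e0 hU].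
have N2 := N_ge2.
pose eta := Num.min (e / 2) 1.
have eta0 : 0 < eta by rewrite lt_min ltr01 andbT divr_gt0.
have eta1 : eta <= 1 by rewrite ge_min lexx orbT.
have eta2 : eta <= e / 2 by rewrite ge_min lexx.
pose d := eta / n%:R.
have d0 : 0 < d by rewrite divr_gt0 //; lra.
have etad : eta = n%:R * d by rewrite /d mulrC mulfVK //; apply/eqP => h; lra.
exists ((1 - eta) *: y), d; split => // z hz.
have hzQ : forall j, `|(z *m Q) 0 j| <= (n.-1)%:R * d.
  move=> j; apply: le_trans (lin_bound _ _ Q_le1) _.
  by apply: sum_bound => i; apply: ltW.
split.
  apply: hU; apply/(ball_mx _ _ e0) => i j; rewrite !(ord1 i) !mxE.
  have hy1 := coord_le1 j hy.
  have := hzQ j; rewrite Nm1 mxE => hzj.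
  have -> : y 0 j - ((1 - eta) * y 0 j + \sum_j0 z 0 j0 * Q j0 j) =
    eta * y 0 j - \sum_j0 z 0 j0 * Q j0 j by ring.
  apply: le_lt_trans (ler_normB _ _) _.
  rewrite normrM (ger0_norm (ltW eta0)).
  have h3 := normr_ge0 (y 0 j).
  nra.
have -> : (1 - eta) *: y + z *m Q = (1 - eta) *: y + (1 - (1 - eta)) *: (eta^-1 *: (z *m Q)).
  have -> : 1 - (1 - eta) = eta by ring.
  by rewrite scalerA mulfV ?scale1r //; apply/eqP => h; lra.
apply: dotv_convex => //.
  by apply/andP; split; lra.
rewrite dotvZ dotv_zQ.
have hz2 : dotv z z <= (n.-1)%:R * d ^+ 2.
  rewrite /dotv; under eq_bigr do rewrite -expr2.
  apply: sum_bound => i; have := hz i; have := normr_ge0 (z 0 i).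
  rewrite -real_normK ?num_real // => h1 h2.
  by rewrite lerXn2r // ?nnegrE //; [apply: ltW | apply: ltW].
rewrite Nm1 in hz2.
have ei : eta^-1 ^+ 2 * eta ^+ 2 = 1 by rewrite -exprMn mulVf ?expr1n //; apply/eqP => h; lra.
have ei0 : 0 <= eta^-1 ^+ 2 by apply: sqr_ge0.
have : dotv z z <= eta ^+ 2 by rewrite etad; nra.
move=> h; nra.
Qed.

Definition Yp := hyperplane_chart u Q @^-1` (tangent_proj u @` @unit_ball R n).

Lemma gB_Y x : unit_ball x -> Yp (gmap x).
Proof. by move=> Bx; exists x => //; rewrite chart_g. Qed.

Lemma Y_gB y : Yp y -> exists2 x, unit_ball x & gmap x = y.
Proof.
by move=> [x Bx hx]; exists x => //; rewrite -(g_chart y) -hx gproj.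
Qed.

Lemma closure1 k (w p : 'rV[R]_k) : closure [set w] p -> p = w.
Proof.
move=> cp; apply/matrixP => i j; apply/eqP; apply/negPn/negP => hne.
have e0 : 0 < `|p i j - w i j| by rewrite normr_gt0 subr_eq0.
have [x [xw px]] := cp _ (nbhsx_ballx p _ e0).
have := proj1 (ball_mx p x e0) px i j; by rewrite xw ltxx.
Qed.

Lemma nd_pre (F : set 'rV[R]_(n.-1)) :
  rel_interior Yp (rel_closure Yp F) = set0 ->
  rel_interior (@unit_ball R n) (rel_closure (@unit_ball R n) (gmap @^-1` F `&` @unit_ball R n)) = set0.
Proof.
move=> H; apply/seteqP; split => // y [By [U [oU Uy hU]]].
have [y' [d [d0 hK]]] := KG By oU Uy.
have hK0 : U y' /\ unit_ball y'.
  have z0 : forall j, `|(0 : 'rV[R]_(n.-1)) 0 j| < d by move=> j; rewrite mxE normr0.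
  by have := hK 0 z0; rewrite mul0mx addr0.
suff : rel_interior Yp (rel_closure Yp F) (gmap y') by rewrite H.
split; first exact: gB_Y (proj2 hK0).
exists (ball (gmap y') d); split; [exact: ball_open | exact: ballxx |].
move=> w [bw Yw]; split => //.
have hz : forall j, `|(w - gmap y') 0 j| < d.
  move=> j; have := proj1 (ball_mx _ _ d0) bw 0 j.
  rewrite distrC; apply: le_lt_trans; rewrite !mxE.
  by [].
have [Ux Bx] := hK _ hz.
have [cl _] := hU _ (conj Ux Bx).
have := g_closure cl; rewrite g_lin addrC subrK.
by apply: closureS => _ [x [Fx _] <-].
Qed.

Lemma nd_fiber w :
  rel_interior (@unit_ball R n) (rel_closure (@unit_ball R n) (gmap @^-1` [set w] `&` @unit_ball R n)) = set0.
Proof.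
apply/seteqP; split => // y [By [U [oU Uy hU]]].
have [y' [d [d0 hK]]] := KG By oU Uy.
have key : forall z : 'rV[R]_(n.-1), (forall j, `|z 0 j| < d) -> gmap y' + z = w.
  move=> z hz; have [Ux Bx] := hK _ hz.
  have [cl _] := hU _ (conj Ux Bx).
  have := g_closure cl; rewrite g_lin => c; apply: closure1.
  by apply: closureS c => _ [x [Fx _] <-].
have d20 : 0 < d / 2 by rewrite divr_gt0.
have z0 : forall j, `|(0 : 'rV[R]_(n.-1)) 0 j| < d by move=> j; rewrite mxE normr0.
have z1 : forall j, `|(const_mx (d / 2) : 'rV[R]_(n.-1)) 0 j| < d.
  by move=> j; rewrite mxE gtr0_norm //; lra.
have h1 := key 0 z0.
have h2 := key _ z1.
have j0 : 'I_(n.-1) by exists 0%N; rewrite -ltnS prednK // (leq_trans _ hn).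
have : const_mx (d / 2) = 0 :> 'rV[R]_(n.-1) by apply: (addrI (gmap y')); rewrite h2 h1.
move/matrixP/(_ 0 j0); rewrite !mxE => h.
by move: d20; rewrite h ltxx.
Qed.

Lemma null_sub k (A C : set 'rV[R]_k) : A `<=` C -> lebesgue_null C -> lebesgue_null A.
Proof.
move=> AC hC eps e0; have [a [b [h1 h2 h3]]] := hC eps e0.
by exists a, b; split => // x /AC /h2.
Qed.

Lemma null1 (w : 'rV[R]_(n.-1)) : lebesgue_null [set w].
Proof.
move=> eps e0; exists (fun=> w), (fun=> w); split => //.
  by move=> x ->; exists 0%N => // j; rewrite lexx.
move=> m; rewrite big1 // => i _; rewrite /box_vol.
rewrite (eq_bigr (fun=> 0)); last by move=> j _; rewrite subrr.
have hpos : (0 < n.-1)%N by rewrite -ltnS prednK // (leq_trans _ hn).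
by rewrite prodr_const card_ord expr0n eqn0Ngt hpos.
Qed.

Lemma dotu_le1 x : unit_ball x -> `|dotv x u| <= 1.
Proof.
rewrite /unit_ball /= dotv_decomp => h; apply: le1_of_sq.
have : 0 <= dotv (gmap x) (gmap x).
  by apply: sumr_ge0 => j _; rewrite -expr2 sqr_ge0.
lra.
Qed.

Lemma null_pre N : lebesgue_null N ->
  lebesgue_null [set x | N (gmap x) /\ `|dotv x u| <= 1].
Proof.
move=> Nn.
have hmn : n = (n.-1).+1 by rewrite prednK // (leq_trans _ hn).
have E := ML hmn Q_le1 u_le1 Nn.
apply: null_sub E => x [Nx hx]; exists (gmap x), (dotv x u); split => //.
exact: decomp.
Qed.

Lemma S_sub (A : set 'rV[R]_n) y :
  (hyperplane_chart u Q @^-1` (tangent_proj u @` A)) y -> exists2 a, A a & y = gmap a.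
Proof. by move=> [a Aa e]; exists a => //; rewrite -(g_chart y) -e gproj. Qed.

Lemma S_sup (A : set 'rV[R]_n) a : A a ->
  (hyperplane_chart u Q @^-1` (tangent_proj u @` A)) (gmap a).
Proof. by move=> Aa; exists a => //; rewrite chart_g. Qed.

Lemma countable_from (A : set 'rV[R]_n) (P : 'rV[R]_(n.-1) -> set 'rV[R]_n) :
  A `<=` @unit_ball R n ->
  (forall w, countable (A `&` P w)) -> (forall x, A x -> P (gmap x) x) ->
  countable (gmap @` A) -> countable A.
Proof.
move=> hA hP hx cA.
have : countable (\bigcup_(w in gmap @` A) (A `&` P w)).
  by apply: bigcup_countable => // w _; exact: hP.
apply: sub_countable; apply: subset_card_le => x Ax.
by exists (gmap x); [exists x | split => //; exact: hx].
Qed.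

Lemma sier (A : set 'rV[R]_n) : A `<=` @unit_ball R n ->
  Sierpinski_in (@unit_ball R n) A ->
  Sierpinski_in Yp (hyperplane_chart u Q @^-1` (tangent_proj u @` A)).
Proof.
move=> hA [_ nA cA]; split.
- by move=> y [a Aa e]; exists a => //; exact: hA.
- move=> cS; apply: nA.
  apply: (@countable_from A (fun w => [set x | [set w] (gmap x) /\ `|dotv x u| <= 1])) => //.
  + by move=> w; apply: cA; apply: null_pre; exact: null1.
  + by move=> x Ax; split => //; exact: dotu_le1 (hA _ Ax).
  + by apply: sub_countable cS; apply: subset_card_le => _ [a Aa <-]; exact: S_sup.
- move=> N Nn.
  have := cA _ (null_pre Nn); move/(sub_countable (card_image_le gmap _)).
  apply: sub_countable; apply: subset_card_le => y [/S_sub [a Aa ->] Ny].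
  by exists a => //; split => //; split => //; exact: dotu_le1 (hA _ Aa).
Qed.

Lemma lusin (A : set 'rV[R]_n) : A `<=` @unit_ball R n ->
  Lusin_in (@unit_ball R n) A ->
  Lusin_in Yp (hyperplane_chart u Q @^-1` (tangent_proj u @` A)).
Proof.
move=> hA [_ nA cA]; split.
- by move=> y [a Aa e]; exists a => //; exact: hA.
- move=> cS; apply: nA.
  apply: (@countable_from A (fun w => gmap @^-1` [set w] `&` @unit_ball R n)) => //.
  + move=> w; apply: cA; split; first by move=> x [].
    exists (fun=> gmap @^-1` [set w] `&` @unit_ball R n); split.
      by move=> i; split; [move=> x [] | exact: nd_fiber].
    by move=> x hx; exists 0%N.
  + by move=> x Ax; split => //; exact: hA.
  + by apply: sub_countable cS; apply: subset_card_le => _ [a Aa <-]; exact: S_sup.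
- move=> M [MY [F [hF hMF]]].
  have mB : meager_in (@unit_ball R n) (gmap @^-1` M `&` @unit_ball R n).
    split; first by move=> x [].
    exists (fun i => gmap @^-1` F i `&` @unit_ball R n); split.
      move=> i; split; first by move=> x [].
      by apply: nd_pre; exact: (proj2 (hF i)).
    by move=> x [Mx Bx]; have [i _ Fi] := hMF _ Mx; exists i.
  have := cA _ mB; move/(sub_countable (card_image_le gmap _)).
  apply: sub_countable; apply: subset_card_le => y [/S_sub [a Aa ->] My].
  by exists a => //; split => //; split => //; exact: hA.
Qed.

End Alg.

Theorem mainTheorem9 (R : realType) (n : nat) (hn : (2 <= n)%N)
    (A : set 'rV[R]_n) (hA : A `<=` @unit_ball R n) :
  (Lusin_in (@unit_ball R n) A ->
    forall (u : 'rV[R]_n) (Q : 'M[R]_(n.-1, n)),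
      dotv u u = 1 -> orthonormal_frame u Q ->
      Lusin_in (hyperplane_chart u Q @^-1` (tangent_proj u @` @unit_ball R n))
               (hyperplane_chart u Q @^-1` (tangent_proj u @` A))) /\
  (Sierpinski_in (@unit_ball R n) A ->
    forall (u : 'rV[R]_n) (Q : 'M[R]_(n.-1, n)),
      dotv u u = 1 -> orthonormal_frame u Q ->
      Sierpinski_in (hyperplane_chart u Q @^-1` (tangent_proj u @` @unit_ball R n))
                    (hyperplane_chart u Q @^-1` (tangent_proj u @` A))).
Proof.
split.
- move=> hL u Q hu [hQ hQu]; exact: (lusin hn hu hQ hQu hA hL).
- move=> hS u Q hu [hQ hQu]; exact: (sier hn hu hQ hQu hA hS).
Qed.
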